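(* Let $k\ge2$, $\lambda>0$, $\theta>1$ (i.e. $J<0$). Put $\theta_{\rm cr}=2\bigl(\frac{k+1}{k-1}\bigr)^2-1$. Then: (1) if $\theta\le\theta_{\rm cr}$, there is exactly one TISGM; (2) if $\theta>\theta_{\rm cr}$, the quadratic $2x^2+[4-(\theta-1)(k-1)]x+\theta+1=0$ has two distinct positive roots $x_1,x_2$, and the two numbers $\frac{2^kx_i}{(1+\theta)^{k+1}}\bigl(\frac{1+\theta+2x_i}{2(1+x_i)}\bigr)^k$, $i=1,2$, are distinct; denote them $\lambda_-<\lambda_+$. Then: (2a) if $\lambda\in(0,\lambda_-)\cup(\lambda_+,\infty)$ there is exactly one TISGM; (2b) if $\lambda\in\{\lambda_-,\lambda_+\}$ there are exactly two TISGMs; (2c) if $\lambda\in(\lambda_-,\lambda_+)$ there are exactly three TISGMs.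
   Context: The SCWR model on the Cayley tree $\mathbb{T}^k$ (each vertex has $k$ direct successors) has spins in $\{-1,0,1\}$, activity $\lambda>0$ and interaction parameter $\theta=e^{-J\beta}>0$ ($J<0$ antiferromagnetic, i.e. $\theta>1$; $J>0$ ferromagnetic, i.e. $0<\theta<1$). Translation-invariant splitting Gibbs measures (TISGMs) are in one-to-one correspondence with the solutions $(x,y)\in(0,\infty)^2$ of the system $x=\lambda\bigl(\frac{1+x+\theta y}{1+x+y}\bigr)^k$, $y=\lambda\bigl(\frac{1+\theta x+y}{1+x+y}\bigr)^k$; ''the number of TISGMs'' means the number of such positive solutions. *)

(* Defs.v *)
From Stdlib Require Import Reals List.
Import ListNotations.
Open Scope R_scope.

(* The TISGM system on the Cayley tree T^k with activity lam, parameter theta. *)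
Definition is_TISGM_solution (k : nat) (lam theta x y : R) : Prop :=
  0 < x /\ 0 < y /\
  x = lam * ((1 + x + theta * y) / (1 + x + y)) ^ k /\
  y = lam * ((1 + theta * x + y) / (1 + x + y)) ^ k.

Definition has_exactly (n : nat) (P : R * R -> Prop) : Prop :=
  exists l : list (R * R),
    NoDup l /\ length l = n /\ (forall p, In p l <-> P p).

(* Number of TISGMs = number of positive solutions (x,y). *)
Definition num_TISGM_eq (k : nat) (lam theta : R) (n : nat) : Prop :=
  has_exactly n (fun p => is_TISGM_solution k lam theta (fst p) (snd p)).

Definition theta_cr (k : nat) : R :=
  2 * ((INR k + 1) / (INR k - 1)) ^ 2 - 1.

Definition quad (k : nat) (theta x : R) : R :=
  2 * x ^ 2 + (4 - (theta - 1) * (INR k - 1)) * x + theta + 1.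

Definition lam_of (k : nat) (theta x : R) : R :=
  2 ^ k * x / (1 + theta) ^ (k + 1) *
  ((1 + theta + 2 * x) / (2 * (1 + x))) ^ k.

(* Main.v *)
Require Import Defs.
From Stdlib Require Import Reals.
From Stdlib Require Import Reals Lra Lia Ranalysis5 List.
From Coquelicot Require Import Coquelicot.
Import ListNotations.
Open Scope R_scope.

Lemma pow_lt_strict a b n : 0 <= a < b -> a ^ (S n) < b ^ (S n).
Proof.
  intros [H1 H2]. induction n.
  - simpl; lra.
  - change (a * a ^ (S n) < b * b ^ (S n)).
    assert (0 <= a ^ S n) by (apply pow_le; lra).
    nra.
Qed.

Definition Fk (k : nat) (t x : R) := x * ((1 + 2 * x) / (1 + (1 + t) * x)) ^ k.
Definition Dk (k : nat) (t x : R) :=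
  ((1 + 2 * x) / (1 + (1 + t) * x)) ^ (pred k) *
  (quad k t ((1 + t) * x) / ((1 + t) * (1 + (1 + t) * x) ^ 2)).

Lemma F_deriv k t x : (1 <= k)%nat -> 1 < t -> 0 <= x ->
  derivable_pt_lim (Fk k t) x (Dk k t x).
Proof.
  intros Hk Ht Hx. apply is_derive_Reals. unfold Fk, Dk.
  assert (Hd : 0 < 1 + (1 + t) * x) by nra.
  auto_derive.
  - lra.
  - destruct k as [|m]; [lia|]. simpl pred. unfold quad. rewrite S_INR.
    simpl pow.
    set (g := ((1 + 2 * x) * / (1 + (1 + t) * x))).
    set (G := ((1 + 2 * x) / (1 + (1 + t) * x))).
    assert (G = g) by reflexivity. rewrite H.
    set (gm := g ^ m). unfold g. field. lra.
Qed.

Lemma F_cont k t x : (1 <= k)%nat -> 1 < t -> 0 <= x -> continuity_pt (Fk k t) x.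
Proof.
  intros. apply derivable_continuous_pt. exists (Dk k t x). apply F_deriv; auto.
Qed.

Lemma D_pos k t x : 1 < t -> 0 < x -> 0 < quad k t ((1 + t) * x) -> 0 < Dk k t x.
Proof.
  intros Ht Hx Hq. unfold Dk. apply Rmult_lt_0_compat.
  - apply pow_lt. apply Rdiv_lt_0_compat; nra.
  - apply Rdiv_lt_0_compat; auto. apply Rmult_lt_0_compat; [lra|]. apply pow_lt; nra.
Qed.

Lemma D_neg k t x : 1 < t -> 0 < x -> quad k t ((1 + t) * x) < 0 -> Dk k t x < 0.
Proof.
  intros Ht Hx Hq. unfold Dk.
  assert (0 < ((1 + 2 * x) / (1 + (1 + t) * x)) ^ (pred k))
    by (apply pow_lt; apply Rdiv_lt_0_compat; nra).
  assert (0 < (1 + t) * (1 + (1 + t) * x) ^ 2)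
    by (apply Rmult_lt_0_compat; [lra|]; apply pow_lt; nra).
  assert (quad k t ((1 + t) * x) / ((1 + t) * (1 + (1 + t) * x) ^ 2) < 0).
  { unfold Rdiv. assert (0 < / ((1 + t) * (1 + (1 + t) * x) ^ 2)) by (apply Rinv_0_lt_compat; auto). nra. }
  nra.
Qed.

Lemma F_incr k t a b : (1 <= k)%nat -> 1 < t -> 0 <= a -> a < b ->
  (forall c, a < c < b -> 0 < quad k t ((1 + t) * c)) -> Fk k t a < Fk k t b.
Proof.
  intros Hk Ht Ha Hab Hq.
  destruct (MVT_cor2 (Fk k t) (Dk k t) a b Hab) as [c [Hc1 Hc2]].
  { intros c Hc. apply F_deriv; auto; lra. }
  assert (0 < Dk k t c) by (apply D_pos; auto; lra). nra.
Qed.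

Lemma F_decr k t a b : (1 <= k)%nat -> 1 < t -> 0 <= a -> a < b ->
  (forall c, a < c < b -> quad k t ((1 + t) * c) < 0) -> Fk k t b < Fk k t a.
Proof.
  intros Hk Ht Ha Hab Hq.
  destruct (MVT_cor2 (Fk k t) (Dk k t) a b Hab) as [c [Hc1 Hc2]].
  { intros c Hc. apply F_deriv; auto; lra. }
  assert (Dk k t c < 0) by (apply D_neg; auto; lra). nra.
Qed.

Lemma F_ivt_incr k t a b y : (1 <= k)%nat -> 1 < t -> 0 <= a -> a < b ->
  Fk k t a < y < Fk k t b -> exists c, a < c < b /\ Fk k t c = y.
Proof.
  intros Hk Ht Ha Hab Hy.
  destruct (IVT_interv (fun x => Fk k t x - y) a b) as [z [Hz1 Hz2]]; auto.
  - intros c Hc. apply continuity_pt_minus. apply F_cont; auto; lra.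
    apply continuity_pt_const. intros u v; auto.
  - lra.
  - lra.
  - exists z. simpl in Hz2. assert (z <> a) by (intro; subst; lra).
    assert (z <> b) by (intro; subst; lra). split; [lra|lra].
Qed.

Lemma F_ivt_decr k t a b y : (1 <= k)%nat -> 1 < t -> 0 <= a -> a < b ->
  Fk k t b < y < Fk k t a -> exists c, a < c < b /\ Fk k t c = y.
Proof.
  intros Hk Ht Ha Hab Hy.
  destruct (IVT_interv (fun x => y - Fk k t x) a b) as [z [Hz1 Hz2]]; auto.
  - intros c Hc. apply continuity_pt_minus.
    apply continuity_pt_const. intros u v; auto. apply F_cont; auto; lra.
  - lra.
  - lra.
  - exists z. simpl in Hz2. assert (z <> a) by (intro; subst; lra).
    assert (z <> b) by (intro; subst; lra). split; [lra|lra].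
Qed.

Lemma F_lt_x k t x : (1 <= k)%nat -> 1 < t -> 0 < x -> Fk k t x < x.
Proof.
  intros Hk Ht Hx. unfold Fk.
  assert (H : 0 <= (1 + 2 * x) / (1 + (1 + t) * x) < 1).
  { split. apply Rlt_le, Rdiv_lt_0_compat; nra.
    apply (Rmult_lt_reg_r (1 + (1 + t) * x)); [nra|]. unfold Rdiv.
    rewrite Rmult_assoc, Rinv_l by nra. nra. }
  destruct (pow_lt_1_compat _ k H) as [_ H2]; [lia|]. nra.
Qed.

Lemma F_ge k t x : 1 < t -> 0 < x -> x * (2 / (1 + t)) ^ k <= Fk k t x.
Proof.
  intros Ht Hx. unfold Fk. apply Rmult_le_compat_l; [lra|]. apply pow_incr. split.
  apply Rlt_le, Rdiv_lt_0_compat; lra.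
  apply (Rmult_le_reg_r ((1 + t) * (1 + (1 + t) * x))); [nra|]. unfold Rdiv.
  replace (2 * / (1 + t) * ((1 + t) * (1 + (1 + t) * x))) with (2 * (1 + (1 + t) * x)) by (field; lra).
  replace ((1 + 2 * x) * / (1 + (1 + t) * x) * ((1 + t) * (1 + (1 + t) * x))) with ((1 + 2 * x) * (1 + t)) by (field; nra).
  nra.
Qed.

Lemma F_big k t y r : 1 < t -> exists X, r < X /\ y < Fk k t X.
Proof.
  intros Ht. set (c := (2 / (1 + t)) ^ k).
  assert (Hc : 0 < c) by (apply pow_lt, Rdiv_lt_0_compat; lra).
  set (X := Rabs y / c + Rabs r + 1).
  assert (0 <= Rabs y / c) by (apply Rdiv_le_0_compat; [apply Rabs_pos|lra]).
  assert (Hr := Rle_abs r). assert (Hy := Rle_abs y). pose proof (Rabs_pos r).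
  exists X. split. unfold X; lra.
  assert (HX : 0 < X) by (unfold X; lra).
  pose proof (F_ge k t X Ht HX). fold c in H1.
  assert (X * c >= (Rabs y / c + 1) * c) by (apply Rmult_ge_compat_r; unfold X; lra).
  replace ((Rabs y / c + 1) * c) with (Rabs y + c) in H2 by (field; lra). lra.
Qed.

Lemma sol_iff k lam t x y : (1 <= k)%nat -> 1 < t ->
  (is_TISGM_solution k lam t x y <-> x = y /\ 0 < x /\ Fk k t x = lam).
Proof.
  intros Hk Ht. unfold is_TISGM_solution. split.
  - intros [Hx [Hy [E1 E2]]].
    set (A := (1 + x + t * y) / (1 + x + y)) in *.
    set (B := (1 + t * x + y) / (1 + x + y)) in *.
    assert (HA : 0 < A) by (apply Rdiv_lt_0_compat; nra).
    assert (HB : 0 < B) by (apply Rdiv_lt_0_compat; nra).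
    assert (HAk : 0 < A ^ k) by (apply pow_lt; auto).
    assert (Hl : 0 < lam) by nra.
    destruct k as [|m]; [lia|].
    assert (Exy : x = y).
    { destruct (Rtotal_order x y) as [Hlt|[Heq|Hgt]]; auto; exfalso.
      - assert (B < A).
        { unfold A, B. apply (Rmult_lt_reg_r (1 + x + y)); [lra|]. unfold Rdiv.
          rewrite !Rmult_assoc, Rinv_l by lra. nra. }
        assert (B ^ S m < A ^ S m) by (apply pow_lt_strict; lra). nra.
      - assert (A < B).
        { unfold A, B. apply (Rmult_lt_reg_r (1 + x + y)); [lra|]. unfold Rdiv.
          rewrite !Rmult_assoc, Rinv_l by lra. nra. }
        assert (A ^ S m < B ^ S m) by (apply pow_lt_strict; lra). nra. }
    subst A B. subst y. split; [auto|split; auto].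
    unfold Fk. rewrite E1 at 1. rewrite Rmult_assoc, <- Rpow_mult_distr.
    replace ((1 + x + t * x) / (1 + x + x) * ((1 + 2 * x) / (1 + (1 + t) * x))) with 1.
    rewrite pow1; ring. field. split; nra.
  - intros [Exy [Hx E]]. subst y.
    assert (0 < lam) by (rewrite <- E; unfold Fk; apply Rmult_lt_0_compat; auto;
      apply pow_lt, Rdiv_lt_0_compat; nra).
    assert (Heq : x = lam * ((1 + x + t * x) / (1 + x + x)) ^ k).
    { rewrite <- E. unfold Fk. rewrite Rmult_assoc, <- Rpow_mult_distr.
      replace ((1 + 2 * x) / (1 + (1 + t) * x) * ((1 + x + t * x) / (1 + x + x))) with 1.
      rewrite pow1; ring. field. split; nra. }
    split; [auto|split; [auto|split]].
    exact Heq. replace (1 + t * x + x) with (1 + x + t * x) by ring. exact Heq.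
Qed.

Lemma lam_of_F k t u : 1 < t -> 0 <= u -> lam_of k t u = Fk k t (u / (1 + t)).
Proof.
  intros Ht Hu. unfold lam_of, Fk.
  replace ((1 + 2 * (u / (1 + t))) / (1 + (1 + t) * (u / (1 + t))))
    with (2 * / (1 + t) * ((1 + t + 2 * u) / (2 * (1 + u)))) by (field; lra).
  rewrite Rpow_mult_distr, Rpow_mult_distr, pow_inv, pow_add.
  assert (0 < (1 + t) ^ k) by (apply pow_lt; lra). field. lra.
Qed.

Definition SolP k lam t := fun p : R * R => is_TISGM_solution k lam t (fst p) (snd p).

Lemma has1 k lam t a : (1 <= k)%nat -> 1 < t -> 0 < a -> Fk k t a = lam ->
  (forall x, 0 < x -> Fk k t x = lam -> x = a) -> num_TISGM_eq k lam t 1.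
Proof.
  intros Hk Ht Ha Ea U. exists [(a, a)]. split; [|split].
  - constructor; [simpl; tauto|constructor].
  - reflexivity.
  - intros [x y]. simpl. rewrite sol_iff by auto. split.
    + intros [H|[]]. inversion H; subst. auto.
    + intros [E [Hx Fx]]. subst y. left. rewrite (U x Hx Fx). reflexivity.
Qed.

Lemma has2 k lam t a b : (1 <= k)%nat -> 1 < t -> 0 < a -> Fk k t a = lam ->
  0 < b -> Fk k t b = lam -> a <> b ->
  (forall x, 0 < x -> Fk k t x = lam -> x = a \/ x = b) -> num_TISGM_eq k lam t 2.
Proof.
  intros Hk Ht Ha Ea Hb Eb Nab U. exists [(a, a); (b, b)]. split; [|split].
  - constructor; [|constructor; [simpl; tauto|constructor]].
    simpl. intros [H|[]]. inversion H; auto.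
  - reflexivity.
  - intros [x y]. simpl. rewrite sol_iff by auto. split.
    + intros [H|[H|[]]]; inversion H; subst; auto.
    + intros [E [Hx Fx]]. subst y. destruct (U x Hx Fx); subst; auto.
Qed.

Lemma has3 k lam t a b c : (1 <= k)%nat -> 1 < t -> 0 < a -> Fk k t a = lam ->
  0 < b -> Fk k t b = lam -> 0 < c -> Fk k t c = lam -> a <> b -> a <> c -> b <> c ->
  (forall x, 0 < x -> Fk k t x = lam -> x = a \/ x = b \/ x = c) -> num_TISGM_eq k lam t 3.
Proof.
  intros Hk Ht Ha Ea Hb Eb Hc Ec Nab Nac Nbc U. exists [(a, a); (b, b); (c, c)].
  split; [|split].
  - constructor; [|constructor; [|constructor; [simpl; tauto|constructor]]].
    + simpl. intros [H|[H|[]]]; inversion H; auto.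
    + simpl. intros [H|[]]; inversion H; auto.
  - reflexivity.
  - intros [x y]. simpl. rewrite sol_iff by auto. split.
    + intros [H|[H|[H|[]]]]; inversion H; subst; auto.
    + intros [E [Hx Fx]]. subst y. destruct (U x Hx Fx) as [->|[->| ->]]; auto.
Qed.


Lemma quad_fact k t s u : s * s = (4 - (t - 1) * (INR k - 1)) ^ 2 - 8 * (t + 1) ->
  quad k t u = 2 * (u - (- (4 - (t - 1) * (INR k - 1)) - s) / 4)
                 * (u - (- (4 - (t - 1) * (INR k - 1)) + s) / 4).
Proof.
  intros H. unfold quad.
  apply Rminus_diag_uniq.
  match goal with |- ?A - ?B = 0 => replace (A - B) with
    ((s * s - ((4 - (t - 1) * (INR k - 1)) ^ 2 - 8 * (t + 1))) / 8) by field end.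
  rewrite H. field.
Qed.

Lemma inj_on (f : R -> R) (P : R -> Prop) :
  (forall a b, P a -> P b -> a < b -> f a < f b) ->
  forall x y, P x -> P y -> f x = f y -> x = y.
Proof.
  intros H x y Px Py E. destruct (Rtotal_order x y) as [h|[h|h]]; auto.
  - specialize (H x y Px Py h); lra.
  - specialize (H y x Py Px h); lra.
Qed.

Lemma inj_on_d (f : R -> R) (P : R -> Prop) :
  (forall a b, P a -> P b -> a < b -> f b < f a) ->
  forall x y, P x -> P y -> f x = f y -> x = y.
Proof.
  intros H x y Px Py E. destruct (Rtotal_order x y) as [h|[h|h]]; auto.
  - specialize (H x y Px Py h); lra.
  - specialize (H y x Py Px h); lra.
Qed.

Lemma case1 k t : (2 <= k)%nat -> 1 < t -> t <= theta_cr k ->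
  forall lam, 0 < lam -> num_TISGM_eq k lam t 1.
Proof.
  intros Hk Ht Hcr lam Hl.
  assert (Hk1 : (1 <= k)%nat) by lia.
  assert (HK : 2 <= INR k) by (apply (le_INR 2 k) in Hk; simpl in Hk; lra).
  set (K := INR k) in *.
  set (c0 := (K + 1) / (K - 1)).
  assert (Hc0 : c0 * (K - 1) = K + 1) by (unfold c0; field; lra).
  assert (Hc0p : 0 < c0) by (unfold c0; apply Rdiv_lt_0_compat; lra).
  set (w := sqrt ((t + 1) / 2)).
  assert (Hw2 : w * w = (t + 1) / 2) by (apply sqrt_sqrt; lra).
  assert (Hw0 : 0 <= w) by apply sqrt_pos.
  unfold theta_cr in Hcr. fold K in Hcr. fold c0 in Hcr.
  assert (Hwc : w <= c0) by nra.
  assert (Hb : 0 <= (4 - (t - 1) * (K - 1)) + 4 * w).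
  { assert (w * (K - 1) <= K + 1) by nra. nra. }
  assert (Hq : forall u, 0 <= u -> u <> w -> 0 < quad k t u).
  { intros u Hu Huw. unfold quad. fold K.
    assert (0 < (u - w) * (u - w)).
    { assert (u - w <> 0) by lra. nra. }
    nra. }
  set (r0 := w / (1 + t)).
  assert (Hr0 : (1 + t) * r0 = w) by (unfold r0; field; lra).
  assert (Hinc : forall a b, 0 <= a -> a < b -> Fk k t a < Fk k t b).
  { intros a b Ha Hab.
    assert (HI : forall a b, 0 <= a -> a < b -> (b <= r0 \/ r0 <= a) -> Fk k t a < Fk k t b).
    { intros a' b' Ha' Hab' Hor. apply F_incr; auto. intros c Hc. apply Hq. nra.
      intro E. destruct Hor; nra. }
    destruct (Rle_lt_dec b r0) as [h|h]; [apply HI; auto|].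
    destruct (Rle_lt_dec r0 a) as [h2|h2]; [apply HI; auto|].
    apply Rlt_trans with (Fk k t r0); apply HI; auto; lra. }
  set (x0 := Rmin lam 1).
  assert (Hx0 : 0 < x0) by (unfold x0; apply Rmin_glb_lt; lra).
  assert (Hx0l : x0 <= lam) by apply Rmin_l.
  assert (HF0 := F_lt_x k t x0 Hk1 Ht Hx0).
  destruct (F_big k t lam x0 Ht) as [X [HX1 HX2]].
  destruct (F_ivt_incr k t x0 X lam Hk1 Ht) as [a [Ha Ea]]; try lra.
  apply (has1 k lam t a); auto; try lra.
  intros x Hx Ex. apply (inj_on (Fk k t) (fun z => 0 < z)); auto; try lra.
  intros. apply Hinc; lra.
Qed.

Lemma case2 k t : (2 <= k)%nat -> 1 < t -> theta_cr k < t ->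
     exists x1 x2 : R,
       0 < x1 /\ 0 < x2 /\ x1 <> x2 /\
       quad k t x1 = 0 /\ quad k t x2 = 0 /\
       lam_of k t x1 <> lam_of k t x2 /\
       let lm := Rmin (lam_of k t x1) (lam_of k t x2) in
       let lp := Rmax (lam_of k t x1) (lam_of k t x2) in
       (forall lam : R, 0 < lam ->
          (lam < lm \/ lp < lam) -> num_TISGM_eq k lam t 1) /\
       (forall lam : R, 0 < lam ->
          (lam = lm \/ lam = lp) -> num_TISGM_eq k lam t 2) /\
       (forall lam : R, lm < lam < lp -> num_TISGM_eq k lam t 3).
Proof.
  intros Hk Ht Hcr.
  assert (Hk1 : (1 <= k)%nat) by lia.
  assert (HK : 2 <= INR k) by (apply (le_INR 2 k) in Hk; simpl in Hk; lra).
  set (c0 := (INR k + 1) / (INR k - 1)).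
  assert (Hc0 : c0 * (INR k - 1) = INR k + 1) by (unfold c0; field; lra).
  assert (Hc0p : 0 < c0) by (unfold c0; apply Rdiv_lt_0_compat; lra).
  set (w := sqrt ((t + 1) / 2)).
  assert (Hw2 : w * w = (t + 1) / 2) by (apply sqrt_sqrt; lra).
  assert (Hw0 : 0 <= w) by apply sqrt_pos.
  unfold theta_cr in Hcr. fold c0 in Hcr.
  assert (Hwc : c0 < w) by nra.
  set (b := 4 - (t - 1) * (INR k - 1)).
  assert (Hb : 4 * w < - b).
  { assert (INR k + 1 < w * (INR k - 1)) by nra. unfold b. nra. }
  set (D := b ^ 2 - 8 * (t + 1)).
  assert (HD : 0 < D) by (unfold D; nra).
  set (s := sqrt D).
  assert (Hs2 : s * s = D) by (apply sqrt_sqrt; lra).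
  assert (Hs0 : 0 < s) by (apply sqrt_lt_R0; lra).
  assert (Hsb : s < - b) by (unfold D in Hs2; nra).
  set (x1 := (- b - s) / 4). set (x2 := (- b + s) / 4).
  assert (Hq : forall u, quad k t u = 2 * (u - x1) * (u - x2)).
  { intros u. apply quad_fact. exact Hs2. }
  assert (Hx1 : 0 < x1) by (unfold x1; lra).
  assert (Hx12 : x1 < x2) by (unfold x1, x2; lra).
  set (r1 := x1 / (1 + t)). set (r2 := x2 / (1 + t)).
  assert (Hr1 : (1 + t) * r1 = x1) by (unfold r1; field; lra).
  assert (Hr2 : (1 + t) * r2 = x2) by (unfold r2; field; lra).
  assert (Hr1p : 0 < r1) by (unfold r1; apply Rdiv_lt_0_compat; lra).
  assert (Hr12 : r1 < r2) by (unfold r1, r2; apply Rmult_lt_compat_r; [apply Rinv_0_lt_compat; lra|lra]).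
  assert (L1 : forall a c, 0 <= a -> a < c -> c <= r1 -> Fk k t a < Fk k t c).
  { intros a c Ha Hac Hc. apply F_incr; auto. intros z Hz. rewrite Hq.
    assert ((1 + t) * z < x1) by nra. nra. }
  assert (L2 : forall a c, r1 <= a -> a < c -> c <= r2 -> Fk k t c < Fk k t a).
  { intros a c Ha Hac Hc. apply F_decr; auto; try lra. intros z Hz. rewrite Hq.
    assert ((1 + t) * z < x2) by nra. assert (x1 < (1 + t) * z) by nra. nra. }
  assert (L3 : forall a c, r2 <= a -> a < c -> Fk k t a < Fk k t c).
  { intros a c Ha Hac. apply F_incr; auto; try lra. intros z Hz. rewrite Hq.
    assert (x2 < (1 + t) * z) by nra. nra. }
  remember (Fk k t r1) as A eqn:HA. remember (Fk k t r2) as B eqn:HBd.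
  assert (HAB : B < A) by (rewrite HA, HBd; apply L2; lra).
  assert (HB0 : 0 < B).
  { rewrite HBd; unfold Fk. apply Rmult_lt_0_compat; [lra|]. apply pow_lt, Rdiv_lt_0_compat; nra. }
  assert (V1 : forall x, 0 < x -> x < r1 -> Fk k t x < A) by (intros; rewrite HA; apply L1; lra).
  assert (V2 : forall x, r1 < x -> x <= r2 -> Fk k t x < A) by (intros; rewrite HA; apply L2; lra).
  assert (V3 : forall x, r1 <= x -> x < r2 -> B < Fk k t x) by (intros; rewrite HBd; apply L2; lra).
  assert (V4 : forall x, r2 < x -> B < Fk k t x) by (intros; rewrite HBd; apply L3; lra).
  assert (I1 : forall x y, 0 < x <= r1 -> 0 < y <= r1 -> Fk k t x = Fk k t y -> x = y).
  { apply (inj_on (Fk k t) (fun z => 0 < z <= r1)). intros; apply L1; lra. }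
  assert (I2 : forall x y, r1 <= x <= r2 -> r1 <= y <= r2 -> Fk k t x = Fk k t y -> x = y).
  { apply (inj_on_d (Fk k t) (fun z => r1 <= z <= r2)). intros; apply L2; lra. }
  assert (I3 : forall x y, r2 <= x -> r2 <= y -> Fk k t x = Fk k t y -> x = y).
  { apply (inj_on (Fk k t) (fun z => r2 <= z)). intros; apply L3; lra. }
  assert (E1 : forall lam, 0 < lam -> lam < A -> exists a, 0 < a < r1 /\ Fk k t a = lam).
  { intros lam Hl HlA. set (z0 := Rmin lam (r1 / 2)).
    assert (Hz0 : 0 < z0) by (unfold z0; apply Rmin_glb_lt; lra).
    assert (z0 <= lam) by apply Rmin_l. assert (z0 <= r1 / 2) by apply Rmin_r.
    assert (HF := F_lt_x k t z0 Hk1 Ht Hz0).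
    destruct (F_ivt_incr k t z0 r1 lam Hk1 Ht) as [a [Ha Ea]]; try lra.
    exists a; split; [lra|auto]. }
  assert (E3 : forall lam, B < lam -> exists c, r2 < c /\ Fk k t c = lam).
  { intros lam Hl. destruct (F_big k t lam r2 Ht) as [X [HX1 HX2]].
    destruct (F_ivt_incr k t r2 X lam Hk1 Ht) as [c [Hc Ec]]; try lra.
    exists c; split; [lra|auto]. }
  exists x1, x2.
  rewrite (lam_of_F k t x1), (lam_of_F k t x2) by lra. fold r1 r2. rewrite <- HA, <- HBd.
  rewrite Rmin_right, Rmax_left by lra.
  split; [lra|split; [lra|split; [lra|split; [rewrite Hq; ring|split; [rewrite Hq; ring|]]]]].
  split; [lra|]. cbv zeta.
  split; [|split].
  - intros lam Hl [HlB|HlA].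
    + destruct (E1 lam Hl) as [a [Ha Ea]]; [lra|].
      apply (has1 k lam t a); auto; try lra.
      intros x Hx Ex. destruct (Rlt_le_dec x r1).
      * apply I1; lra.
      * exfalso. destruct (Rle_lt_dec x r2).
        -- destruct (Req_dec x r2). subst x.  lra.
           assert (B < Fk k t x) by (apply V3; lra). lra.
        -- assert (B < Fk k t x) by (apply V4; lra). lra.
    + destruct (E3 lam) as [c [Hc Ec]]; [lra|].
      apply (has1 k lam t c); auto; try lra.
      intros x Hx Ex. destruct (Rlt_le_dec r2 x).
      * apply I3; lra.
      * exfalso. destruct (Rle_lt_dec x r1).
        -- destruct (Req_dec x r1). subst x.  lra.
           assert (Fk k t x < A) by (apply V1; lra). lra.
        -- assert (Fk k t x < A) by (apply V2; lra). lra.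
  - intros lam Hl [HlB|HlA].
    + subst lam. destruct (E1 B HB0 HAB) as [a [Ha Ea]].
      apply (has2 k B t a r2); auto; try lra.
      intros x Hx Ex. destruct (Rlt_le_dec x r1).
      * left. apply I1; lra.
      * destruct (Rlt_le_dec x r2).
        -- assert (B < Fk k t x) by (apply V3; lra). lra.
        -- destruct (Req_dec x r2); [right; auto|].
           assert (B < Fk k t x) by (apply V4; lra). lra.
    + subst lam. destruct (E3 A HAB) as [c [Hc Ec]].
      apply (has2 k A t r1 c); auto; try lra.
      intros x Hx Ex. destruct (Rlt_le_dec r2 x).
      * right. apply I3; lra.
      * destruct (Rle_lt_dec x r1).
        -- destruct (Req_dec x r1); [left; auto|].
           assert (Fk k t x < A) by (apply V1; lra). lra.
        -- assert (Fk k t x < A) by (apply V2; lra). lra.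
  - intros lam [HlB HlA].
    destruct (E1 lam) as [a [Ha Ea]]; try lra.
    destruct (E3 lam) as [c [Hc Ec]]; try lra.
    destruct (F_ivt_decr k t r1 r2 lam Hk1 Ht) as [m [Hm Em]]; try lra.
    apply (has3 k lam t a m c); auto; try lra.
    intros x Hx Ex. destruct (Rlt_le_dec x r1).
    + left. apply I1; lra.
    + destruct (Rle_lt_dec x r2).
      * right; left. destruct (Req_dec x r1). subst x.  lra.
        destruct (Req_dec x r2). subst x.  lra.
        apply I2; lra.
      * right; right. apply I3; lra.
Qed.

Theorem mainTheorem4 (k : nat) (theta : R) :
  (2 <= k)%nat -> 1 < theta ->
  (theta <= theta_cr k ->
     forall lam : R, 0 < lam -> num_TISGM_eq k lam theta 1) /\
  (theta_cr k < theta ->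
     exists x1 x2 : R,
       0 < x1 /\ 0 < x2 /\ x1 <> x2 /\
       quad k theta x1 = 0 /\ quad k theta x2 = 0 /\
       lam_of k theta x1 <> lam_of k theta x2 /\
       let lm := Rmin (lam_of k theta x1) (lam_of k theta x2) in
       let lp := Rmax (lam_of k theta x1) (lam_of k theta x2) in
       (forall lam : R, 0 < lam ->
          (lam < lm \/ lp < lam) -> num_TISGM_eq k lam theta 1) /\
       (forall lam : R, 0 < lam ->
          (lam = lm \/ lam = lp) -> num_TISGM_eq k lam theta 2) /\
       (forall lam : R, lm < lam < lp -> num_TISGM_eq k lam theta 3)).
Proof.
  intros Hk Ht. split.
  - apply case1; auto.
  - apply case2; auto.
Qed.
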